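(* Let $\mathcal{Z}$ be a data space with unknown distribution $\mu$, let $S=(Z_1,\dots,Z_n)$ have i.i.d. entries $Z_i\sim\mu$, let the learning algorithm be a Markov kernel $P_{W|S}$ producing a hypothesis $W$ in a hypothesis class $\mathcal{W}$, with $P_W$ the marginal of $W$ and $P_{W,Z_i}$ the joint law of $(W,Z_i)$. Let $l:\mathcal{W}\times\mathcal{Z}\to\mathbb{R}^+$ be a loss function and assume that for every $i=1,\dots,n$, $l(W,Z_i)$ is $\sigma$-subgaussian when $(W,Z_i)$ is distributed according to $\frac{P_{W,Z_i}+P_W\otimes\mu}{2}$. Then $$|\overline{\text{gen}}(P_{W|S},\mu)|\le 2\sigma\sqrt{2\log 2}.$$
   Context: A random variable $X$ is $\sigma$-subgaussian if $\mathbb{E}[e^{\lambda(X-\mathbb{E}X)}]\le e^{\lambda^2\sigma^2/2}$ for all $\lambda\in\mathbb{R}$. Expected generalization error: $\overline{\text{gen}}(P_{W|S},\mu)=\mathbb{E}_{P_{W,S}}\big[\int l(W,z)\,\mu(dz)-\frac1n\sum_{i=1}^n l(W,Z_i)\big]$. $\log$ is the natural logarithm. *)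

(* Defs.v *)
From HB Require Import structures.
From mathcomp Require Import all_boot all_order all_algebra.
From mathcomp Require Import all_classical all_reals all_analysis.
Set Implicit Arguments. Unset Strict Implicit. Unset Printing Implicit Defensive.
Import Order.TTheory GRing.Theory Num.Theory.
Local Open Scope classical_set_scope.
Local Open Scope ring_scope.

Definition subgaussian d (T : measurableType d) (R : realType)
    (Q : set T -> \bar R) (f : T -> R) (sigma : R) : Prop :=
  Q.-integrable setT (EFin \o f) /\
  forall lam : R,
    (\int[Q]_x (expR (lam * (f x - fine (\int[Q]_y (f y)%:E))))%:E
      <= (expR (lam ^+ 2 * sigma ^+ 2 / 2))%:E)%E.

Definition mixture d (T : measurableType d) (R : realType)
    (m1 m2 : set T -> \bar R) : set T -> \bar R :=
  fun A => ((2^-1)%:E * (m1 A + m2 A))%E.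

(* The law of the sample S : Omega -> n.-tuple Z is the n-fold product mu^{(x)n},
   i.e. S = (Z_1,...,Z_n) has i.i.d. entries with law mu
   (product rule on all measurable rectangles). *)
Definition iid_sample d dZ (Omega : measurableType d) (Z : measurableType dZ)
    (R : realType) (P : probability Omega R) (n : nat)
    (S : Omega -> n.-tuple Z) (mu : probability Z R) : Prop :=
  forall A : 'I_n -> set Z, (forall i, measurable (A i)) ->
    P [set w | forall i, A i (tnth (S w) i)] = (\prod_(i < n) mu (A i))%E.

Definition generated_by_kernel d dS dW (Omega : measurableType d)
    (TS : measurableType dS) (TW : measurableType dW) (R : realType)
    (P : probability Omega R) (S : Omega -> TS) (W : Omega -> TW)
    (K : R.-pker TS ~> TW) : Prop :=
  forall (A : set TS) (B : set TW), measurable A -> measurable B ->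
    P (S @^-1` A `&` W @^-1` B) = (\int[P]_(w in S @^-1` A) K (S w) B)%E.

Definition exp_gen d dZ dW (Omega : measurableType d) (Z : measurableType dZ)
    (TW : measurableType dW) (R : realType) (P : probability Omega R) (n : nat)
    (S : Omega -> n.-tuple Z) (W : Omega -> TW) (mu : probability Z R)
    (l : TW * Z -> R) : \bar R :=
  (\int[P]_w ((\int[mu]_z (l (W w, z))%:E)
               - (n%:R^-1)%:E * \sum_(i < n) (l (W w, tnth (S w) i))%:E))%E.

(* Main.v *)
Require Import Defs.
From HB Require Import structures.
From mathcomp Require Import all_boot all_order all_algebra.
From mathcomp Require Import all_classical all_reals all_analysis.
From mathcomp Require Import ring lra measurable_realfun.
Import Order.TTheory GRing.Theory Num.Theory.
Local Open Scope classical_set_scope.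
Local Open Scope ring_scope.

Lemma real_bound (R : realType) (x s L : R) : 0 < L -> 0 <= s ->
  (forall lam, lam * x <= L + lam ^+ 2 * s ^+ 2 / 2) -> x <= s * Num.sqrt (2 * L).
Proof.
move=> L0 s0 H.
have r0 : 0 < Num.sqrt (2 * L) by rewrite sqrtr_gt0; lra.
have rr : Num.sqrt (2 * L) ^+ 2 = 2 * L by rewrite sqr_sqrtr //; lra.
have [x0|x0] := leP x 0.
  by apply: (le_trans x0); rewrite mulr_ge0 // ltW.
move: s0; rewrite le_eqVlt => /orP[/eqP s0|s0].
  have := H ((L + 1) / x); rewrite -s0 mulrAC -mulrA divff ?gt_eqF //.
  rewrite expr0n /=; lra.
set r := Num.sqrt (2 * L) in r0 rr *.
have := H (r / s).
rewrite expr_div_n -mulrA mulrA divfK; last by rewrite sqrf_eq0 gt_eqF.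
rewrite rr => h.
have h2 : r / s * x <= r * r by rewrite -expr2 rr; lra.
have : x <= r * r / (r / s).
  by rewrite ler_pdivlMr ?divr_gt0 // mulrC.
have -> : r * r / (r / s) = s * r by field; rewrite ?gt_eqF.
by [].
Qed.

Section key.
Context (R : realType) d (T : measurableType d) (P1 P2 : probability T R).
Definition half : {nonneg R} := (2^-1)%:nng.
Local Open Scope ereal_scope.

Lemma mixture_mscale : mixture P1 P2 = mscale half (measure_add P1 P2).
Proof. by apply/funext => A; rewrite /mixture /mscale; congr (_ * _); rewrite -(measure_addE P1 P2). Qed.

Lemma mixE (h : T -> \bar R) : measurable_fun [set: T] h -> (forall x, 0 <= h x) ->
  \int[mixture P1 P2]_x h x = (2^-1)%:E * (\int[P1]_x h x + \int[P2]_x h x).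
Proof.
move=> mh h0; rewrite mixture_mscale ge0_integral_mscale //.
by rewrite ge0_integral_measure_add.
Qed.

Lemma mix_lty (h : T -> \bar R) : measurable_fun [set: T] h -> (forall x, 0 <= h x) ->
  \int[mixture P1 P2]_x h x < +oo -> \int[P1]_x h x < +oo.
Proof.
move=> mh h0; rewrite mixE //.
have : 0 <= \int[P1]_x h x by apply: integral_ge0.
have : 0 <= \int[P2]_x h x by apply: integral_ge0.
case: (\int[P1]_x h x) => [a| |] //; case: (\int[P2]_x h x) => [b| |] //;
  try by move=> *; rewrite ltry.
- by move=> _ _; rewrite addye // muleC gt0_mulye ?lte_fin ?invr_gt0 // ltxx.
- by move=> _ _; rewrite /= muleC gt0_mulye ?lte_fin ?invr_gt0 // ltxx.
Qed.

Lemma key (f : T -> R) (mf : measurable_fun [set: T] f) (f0 : forall x, (0 <= f x)%R)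
  (s : R) (s0 : (0 <= s)%R) :
  subgaussian (mixture P1 P2) f s ->
  P1.-integrable setT (EFin \o f) /\
  (`| fine (\int[P1]_x (f x)%:E) - fine (\int[mixture P1 P2]_x (f x)%:E) |
     <= s * Num.sqrt (2 * ln 2))%R.
Proof.
move=> [iQ Hs].
have mEf : measurable_fun setT (EFin \o f) by exact/measurable_EFinP.
have f0E : forall x, 0 <= (EFin \o f) x by move=> x; rewrite /= lee_fin.
have iQlt : \int[mixture P1 P2]_x (f x)%:E < +oo.
  move: iQ; rewrite mixture_mscale => /integrableP [_].
  under eq_integral => x _ do rewrite gee0_abs ?lee_fin //.
  exact: id.
have i1 : P1.-integrable setT (EFin \o f).
  apply/integrableP; split => //.
  under eq_integral => x _ do rewrite gee0_abs ?lee_fin //.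
  have := @mix_lty (EFin \o f) mEf f0E; move=> h; apply: h. exact: iQlt.
split => //.
set a := fine (\int[P1]_x (f x)%:E).
set m := fine (\int[mixture P1 P2]_x (f x)%:E).
have aE : \int[P1]_x (f x)%:E = a%:E by rewrite fineK //; exact: integrable_fin_num.
suff H : forall lam, (lam * (a - m) <= ln 2 + lam ^+ 2 * s ^+ 2 / 2)%R.
  have L0 : (0 < ln (2:R))%R by apply: ln_gt0; lra.
  rewrite ler_norml; apply/andP; split.
    rewrite lerNl opprB; apply: real_bound => // lam.
    by have := H (- lam)%R; rewrite sqrrN mulNr -mulrN opprB.
  exact: real_bound.
move=> lam.
pose g x := (lam * (f x - m))%R.
have mg : measurable_fun setT g.
  by apply: measurable_funM => //; apply: measurable_funB.
have meg : measurable_fun setT (fun x => (expR (g x))%:E).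
  by apply/measurable_EFinP; apply: measurableT_comp => //; exact: measurable_expR.
have eg0 : forall x, 0 <= (expR (g x))%:E by move=> x; rewrite lee_fin expR_ge0.
have EQ := Hs lam; rewrite -/m in EQ.
have E1lt : \int[P1]_x (expR (g x))%:E < +oo.
  by apply: (mix_lty _ meg eg0); exact: (le_lt_trans EQ (ltry _)).
have ie : P1.-integrable setT (fun x => (expR (g x))%:E).
  apply/integrableP; split => //.
  under eq_integral => x _ do rewrite gee0_abs //.
  exact: E1lt.
set e := expR (lam * (a - m)).
have low : e%:E <= \int[P1]_x (expR (g x))%:E.
  have iaff : P1.-integrable setT (fun x => (e * (1 - lam * a))%:E + (e * lam)%:E * (f x)%:E).
    apply: integrableD => //; first exact: finite_measure_integrable_cst.
    exact: integrableZl.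
  have -> : e%:E = \int[P1]_x ((e * (1 - lam * a))%:E + (e * lam)%:E * (f x)%:E).
    rewrite integralD //; last 2 first.
    - exact: finite_measure_integrable_cst.
    - exact: integrableZl.
    have P1T : (P1 : {measure set T -> \bar R}) [set: T] = 1 := probability_setT P1.
    rewrite integral_cst // P1T -EFinM mulr1 integralZl // aE.
    by rewrite -EFinM -EFinD; congr EFin; ring.
  apply: le_integral => // x _.
  rewrite -EFinM -EFinD lee_fin.
  have -> : g x = (lam * (a - m) + lam * (f x - a))%R by rewrite /g; ring.
  rewrite expRD -/e.
  have := expR_ge1Dx (lam * (f x - a))%R.
  have e0 : (0 < e)%R by exact: expR_gt0.
  move=> h; have := ler_wpM2l (ltW e0) h.
  by apply: le_trans; rewrite le_eqVlt; apply/orP; left; apply/eqP; ring.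
have up : \int[P1]_x (expR (g x))%:E <= 2%:E * (expR (lam ^+ 2 * s ^+ 2 / 2))%:E.
  apply: (@le_trans _ _ (2%:E * \int[mixture P1 P2]_x (expR (g x))%:E)); last first.
    by rewrite lee_pmul2l ?lte_fin //; apply: EQ.
  rewrite mixE // muleA -EFinM divff // mul1e.
  by rewrite leeDl //; apply: integral_ge0.
have := le_trans low up; rewrite -EFinM lee_fin => h.
rewrite -ler_expR expRD lnK //.
by rewrite posrE; lra.
Qed.
End key.

Lemma mixtureC (R : realType) d (T : measurableType d) (m1 m2 : set T -> \bar R) :
  mixture m1 m2 = mixture m2 m1.
Proof. by apply/funext => A; rewrite /mixture addeC. Qed.

Lemma avg_bound (R : realType) (n : nat) (n0 : (0 < n)%N) (B c : R) (A : 'I_n -> R) :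
  (forall i, `|B - A i| <= c) -> `|B - n%:R^-1 * \sum_(i < n) A i| <= c.
Proof.
move=> H.
have nP : (0 < n%:R :> R) by rewrite ltr0n.
have -> : B - n%:R^-1 * \sum_(i < n) A i = n%:R^-1 * \sum_(i < n) (B - A i).
  rewrite sumrB sumr_const card_ord mulrBr -[B *+ n]mulr_natl mulrA mulVf ?gt_eqF //.
  by rewrite mul1r.
rewrite normrM ger0_norm; last by rewrite invr_ge0 ltW.
rewrite ler_pdivrMl //.
apply: (le_trans (ler_norm_sum _ _ _)).
apply: (le_trans (ler_sum _ (fun i _ => H i))).
by rewrite sumr_const card_ord mulr_natl.
Qed.

Theorem proposition1 (R : realType)
  (d dZ dW : measure_display)
  (Omega : measurableType d) (P : probability Omega R)
  (Z : measurableType dZ) (TW : measurableType dW)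
  (mu : probability Z R) (n : nat) (n_gt0 : (0 < n)%N)
  (S : Omega -> n.-tuple Z) (mS : measurable_fun setT S)
  (W : Omega -> TW) (mW : measurable_fun setT W)
  (K : R.-pker (n.-tuple Z) ~> TW)
  (l : TW * Z -> R) (ml : measurable_fun setT l) (l_ge0 : forall x, 0 <= l x)
  (sigma : R) (sigma_ge0 : 0 <= sigma) :
  iid_sample P S mu ->
  generated_by_kernel P S W K ->
  (forall i : 'I_n,
     subgaussian
       (mixture (pushforward P (fun w => (W w, tnth (S w) i)))
                (pushforward P W \x mu)%E)
       l sigma) ->
  (`| exp_gen P S W mu l | <= (2 * sigma * Num.sqrt (2 * ln 2))%:E)%E.
Proof.
move=> _ _ Hsub.
have mSi : forall i, measurable_fun setT (fun w => tnth (S w) i).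
  by move=> i; exact: (measurableT_comp (measurable_tnth i) mS).
have mWi : forall i : 'I_n, measurable_fun setT (fun w => (W w, tnth (S w) i)).
  by move=> i; exact: measurable_fun_pair.
pose XW : {mfun Omega >-> TW} := mfun_Sub (mem_set mW).
pose Xi (i : 'I_n) : {mfun Omega >-> (TW * Z)%type} := mfun_Sub (mem_set (mWi i)).
pose PW := distribution P XW.
pose Pi i := distribution P (Xi i).
pose Q2 := (PW \x mu)%E.
have K1 i := @key R _ _ (Pi i) Q2 l ml l_ge0 sigma sigma_ge0 (Hsub i).
have K2 i : Q2.-integrable setT (EFin \o l) /\
   (`| fine (\int[Q2]_x (l x)%:E) - fine (\int[mixture (Pi i) Q2]_x (l x)%:E) |
     <= sigma * Num.sqrt (2 * ln 2)).
  have H : subgaussian (mixture Q2 (Pi i)) l sigma by rewrite mixtureC; exact: Hsub i.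
  by have := @key R _ _ Q2 (Pi i) l ml l_ge0 sigma sigma_ge0 H; rewrite mixtureC.
pose i0 : 'I_n := Ordinal n_gt0.
have iQ2 := (K2 i0).1.
set B := fine (\int[Q2]_x (l x)%:E).
have BE : (\int[Q2]_x (l x)%:E = B%:E)%E.
  by rewrite fineK //; exact: integrable_fin_num iQ2.
pose A i := fine (\int[Pi i]_x (l x)%:E).
have AE i : (\int[Pi i]_x (l x)%:E = (A i)%:E)%E.
  by rewrite fineK //; exact: integrable_fin_num (K1 i).1.
have hBA i : `|B - A i| <= 2 * sigma * Num.sqrt (2 * ln 2).
  have h1 := (K1 i).2; have h2 := (K2 i).2.
  rewrite -/B in h2; rewrite -/(A i) in h1.
  apply: le_trans (ler_distD (fine (\int[mixture (Pi i) Q2]_x (l x)%:E)) _ _) _.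
  rewrite (distrC _ (A i)).
  have -> : 2 * sigma * Num.sqrt (2 * ln 2) =
    sigma * Num.sqrt (2 * ln 2) + sigma * Num.sqrt (2 * ln 2) by ring.
  exact: lerD.
have mlE : measurable_fun setT (EFin \o l) by exact/measurable_EFinP.
have l0E : forall x, (0 <= (EFin \o l) x)%E by move=> x; rewrite /= lee_fin.
have FE : (\int[P]_w (\int[mu]_z (l (W w, z))%:E) = B%:E)%E.
  rewrite -BE /Q2 (fubini_tonelli1 _ mlE l0E) /PW /distribution.
  rewrite ge0_integral_pushforward //; last 2 first.
  - exact: measurable_fun_fubini_tonelli_F.
  - by move=> y _; apply: integral_ge0 => z _; exact: l0E.
have mF : measurable_fun setT (fun w => \int[mu]_z (l (W w, z))%:E)%E.
  exact: (measurableT_comp (measurable_fun_fubini_tonelli_F _ mlE l0E) mW).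
have F0 w : (0 <= \int[mu]_z (l (W w, z))%:E)%E.
  by apply: integral_ge0 => z _; rewrite lee_fin.
have iF : P.-integrable setT (fun w => \int[mu]_z (l (W w, z))%:E)%E.
  apply/integrableP; split => //.
  under eq_integral => w _ do rewrite gee0_abs //.
  by rewrite FE ltry.
have GE i : (\int[P]_w (l (W w, tnth (S w) i))%:E = (A i)%:E)%E.
  rewrite -AE /Pi /distribution ge0_integral_pushforward //.
  by move=> y _; rewrite lee_fin.
have mG i : measurable_fun setT (fun w => (l (W w, tnth (S w) i))%:E).
  by apply/measurable_EFinP; exact: (measurableT_comp ml (mWi i)).
have iG i : P.-integrable setT (fun w => (l (W w, tnth (S w) i))%:E).
  apply/integrableP; split => //.
  under eq_integral => w _ do rewrite gee0_abs ?lee_fin //.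
  by rewrite GE ltry.
have iS : P.-integrable setT (fun w => \sum_(i < n) (l (W w, tnth (S w) i))%:E)%E.
  apply: integrable_sum => // i _; exact: iG.
have IS : (\int[P]_w (\sum_(i < n) (l (W w, tnth (S w) i))%:E)
    = \sum_(i < n) (A i)%:E)%E.
  rewrite integral_sum //; try (by move=> i; exact: iG).
  by apply: eq_bigr => i _; exact: GE.
have -> : exp_gen P S W mu l = (B%:E - (n%:R^-1)%:E * \sum_(i < n) (A i)%:E)%E.
  rewrite /exp_gen integralB //; last by apply: integrableZl => //; exact iS.
  rewrite FE integralZl //.
  by rewrite IS.
rewrite sumEFin -EFinM -EFinB /= lee_fin.
exact: avg_bound.
Qed.
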